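(* Let $\mathcal{A}$ be a complex Banach algebra with identity, $\lambda$ a nonzero complex number, and $M = \begin{pmatrix} A & B \\ C & D \end{pmatrix} \in M_2(\mathcal{A})$ with $A, D \in \mathcal{A}^d$. If $$AB = \lambda A^\pi B D,\quad DC = 0,\quad BC = 0,$$ then $M \in M_2(\mathcal{A})^d$ and $$M^d = \begin{pmatrix} A^d & 0 \\ 0 & D^d \end{pmatrix} + \sum_{n=0}^{\infty} M^n Q (P^d)^{n+2},$$ where $Q = \begin{pmatrix} 0 & B \\ C & 0 \end{pmatrix}$ and $P^d = \begin{pmatrix} A^d & 0 \\ 0 & D^d \end{pmatrix}$.
   Context: $M_2(\mathcal{A})$ is the Banach algebra of $2\times 2$ matrices over $\mathcal{A}$. An element $x$ of a Banach algebra has a generalized Drazin (g-Drazin) inverse $x^d$ if $x^d$ commutes with $x$, $x^d = x^dxx^d$ and $x - x^2x^d$ is quasinilpotent (i.e. $\lim\|y^n\|^{1/n}=0$ for $y=x-x^2x^d$); $\mathcal{A}^d$ (resp. $M_2(\mathcal{A})^d$) denotes the set of g-Drazin invertible elements. The spectral idempotent is $x^\pi = 1 - xx^d$. *)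

(* Defs.v *)
From Stdlib Require Import Reals.
Open Scope R_scope.
Set Implicit Arguments.

Definition Cplx : Type := (R * R)%type.
Definition C0 : Cplx := (0, 0).
Definition C1 : Cplx := (1, 0).
Definition Cadd (a b : Cplx) : Cplx := (fst a + fst b, snd a + snd b).
Definition Cmul (a b : Cplx) : Cplx :=
  (fst a * fst b - snd a * snd b, fst a * snd b + snd a * fst b).
Definition Cmod (a : Cplx) : R := sqrt (fst a * fst a + snd a * snd a).

Record CBanachAlgebra := {
  car :> Type;
  zero : car; one : car;
  add : car -> car -> car; opp : car -> car; mul : car -> car -> car;
  scal : Cplx -> car -> car;
  norm : car -> R;
  addA : forall x y z, add x (add y z) = add (add x y) z;
  addC : forall x y, add x y = add y x;
  add0 : forall x, add zero x = x;
  addN : forall x, add x (opp x) = zero;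
  mulA : forall x y z, mul x (mul y z) = mul (mul x y) z;
  mul1l : forall x, mul one x = x;
  mul1r : forall x, mul x one = x;
  mulDl : forall x y z, mul (add x y) z = add (mul x z) (mul y z);
  mulDr : forall x y z, mul x (add y z) = add (mul x y) (mul x z);
  scalDl : forall a b x, scal (Cadd a b) x = add (scal a x) (scal b x);
  scalDr : forall a x y, scal a (add x y) = add (scal a x) (scal a y);
  scalA : forall a b x, scal (Cmul a b) x = scal a (scal b x);
  scal1 : forall x, scal C1 x = x;
  scal_mull : forall a x y, mul (scal a x) y = scal a (mul x y);
  scal_mulr : forall a x y, mul x (scal a y) = scal a (mul x y);
  norm_ge0 : forall x, 0 <= norm x;
  norm_eq0 : forall x, norm x = 0 -> x = zero;
  norm_triangle : forall x y, norm (add x y) <= norm x + norm y;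
  norm_scal : forall a x, norm (scal a x) = Cmod a * norm x;
  norm_submult : forall x y, norm (mul x y) <= norm x * norm y;
  norm_one : norm one = 1;
  complete : forall u : nat -> car,
    (forall eps, eps > 0 -> exists N, forall m n, (m >= N)%nat -> (n >= N)%nat ->
        norm (add (u m) (opp (u n))) < eps) ->
    exists l, forall eps, eps > 0 -> exists N, forall n, (n >= N)%nat ->
        norm (add (u n) (opp l)) < eps
}.

Fixpoint gpow (T : Type) (one : T) (mul : T -> T -> T) (x : T) (n : nat) : T :=
  match n with O => one | S k => mul x (gpow one mul x k) end.

(* n-th root of a nonnegative real, with the convention 0^(1/n) = 0 *)
Definition nroot (x : R) (n : nat) : R :=
  match Req_EM_T x 0 with left _ => 0 | right _ => Rpower x (/ INR n) end.

Definition quasinil (T : Type) (one : T) (mul : T -> T -> T) (norm : T -> R) (y : T) :=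
  Un_cv (fun n => nroot (norm (gpow one mul y n)) n) 0.

Definition gdrazin (T : Type) (one : T) (add : T -> T -> T) (opp : T -> T)
    (mul : T -> T -> T) (norm : T -> R) (x xd : T) : Prop :=
  mul xd x = mul x xd /\
  mul (mul xd x) xd = xd /\
  quasinil one mul norm (add x (opp (mul (mul x x) xd))).

Section Alg.
Variable X : CBanachAlgebra.

Definition is_gdrazin (x xd : X) : Prop :=
  gdrazin (one X) (@add X) (@opp X) (@mul X) (@norm X) x xd.

(* spectral idempotent x^pi = 1 - x x^d *)
Definition spid (x xd : X) : X := add X (one X) (opp X (mul X x xd)).

Record M2 := mk2 { e11 : X; e12 : X; e21 : X; e22 : X }.

Definition M2zero : M2 := mk2 (zero X) (zero X) (zero X) (zero X).
Definition M2one : M2 := mk2 (one X) (zero X) (zero X) (one X).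
Definition M2add (M N : M2) : M2 :=
  mk2 (add X (e11 M) (e11 N)) (add X (e12 M) (e12 N))
      (add X (e21 M) (e21 N)) (add X (e22 M) (e22 N)).
Definition M2opp (M : M2) : M2 :=
  mk2 (opp X (e11 M)) (opp X (e12 M)) (opp X (e21 M)) (opp X (e22 M)).
Definition M2mul (M N : M2) : M2 :=
  mk2 (add X (mul X (e11 M) (e11 N)) (mul X (e12 M) (e21 N)))
      (add X (mul X (e11 M) (e12 N)) (mul X (e12 M) (e22 N)))
      (add X (mul X (e21 M) (e11 N)) (mul X (e22 M) (e21 N)))
      (add X (mul X (e21 M) (e12 N)) (mul X (e22 M) (e22 N))).
(* a Banach-algebra norm on M_2(X) (all such norms are equivalent, so
   quasinilpotence and convergence do not depend on the choice) *)
Definition M2norm (M : M2) : R :=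
  norm X (e11 M) + norm X (e12 M) + norm X (e21 M) + norm X (e22 M).
Definition M2pow (M : M2) (n : nat) : M2 := gpow M2one M2mul M n.

Definition is_gdrazin2 (M Md : M2) : Prop :=
  gdrazin M2one M2add M2opp M2mul M2norm M Md.

Fixpoint M2partial (f : nat -> M2) (n : nat) : M2 :=
  match n with O => f O | S k => M2add (M2partial f k) (f (S k)) end.

Definition M2series_to (f : nat -> M2) (S : M2) : Prop :=
  forall eps, eps > 0 -> exists N, forall n, (n >= N)%nat ->
    M2norm (M2add (M2partial f n) (M2opp S)) < eps.
End Alg.

Arguments mk2 {X}.
Arguments is_gdrazin {X}.
Arguments spid {X}.
Arguments M2mul {X}.
Arguments M2add {X}.
Arguments M2opp {X}.
Arguments M2pow {X}.
Arguments is_gdrazin2 {X}.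
Arguments M2series_to {X}.
Arguments M2norm {X}.

(* Main.v *)
Require Import Defs.
From Stdlib Require Import Reals Lra Lia.
Open Scope R_scope.

Definition qseq (x : nat -> R) := forall eps, 0 < eps -> exists N, forall n, (N <= n)%nat -> x n <= eps ^ n.

Lemma pow2_ge n : INR n + 1 <= 2 ^ n.
Proof. induction n. simpl; lra. rewrite S_INR; simpl. pose proof (pos_INR n). lra. Qed.

Lemma big_pow2 C : exists N, forall n, (N <= n)%nat -> C <= 2 ^ n.
Proof.
  destruct (Rle_lt_dec C 1) as [h|h].
  - exists 0%nat. intros n _. pose proof (pow2_ge n). pose proof (pos_INR n). lra.
  - destruct (archimed_cor1 (/ C)) as [N [h1 h2]]. apply Rinv_0_lt_compat; lra.
    exists N. intros n hn. pose proof (pow2_ge n).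
    assert (0 < INR N) by (apply lt_0_INR; lia).
    assert (C < INR N). { destruct (Rlt_le_dec C (INR N)) as [q|q]; auto. exfalso. assert (/ C <= / INR N) by (apply Rinv_le_contravar; lra). lra. }
    assert (INR N <= INR n) by (apply le_INR; lia). lra.
Qed.

Lemma qseq_scale x C : 0 <= C -> qseq x -> qseq (fun n => C * x n).
Proof.
  intros hC hx eps he. destruct (hx (eps/2)) as [N1 h1]. lra.
  destruct (big_pow2 C) as [N2 h2]. exists (max N1 N2). intros n hn.
  specialize (h1 n ltac:(lia)). specialize (h2 n ltac:(lia)).
  replace (eps ^ n) with (2 ^ n * (eps/2)^n) by (rewrite <- Rpow_mult_distr; f_equal; field).
  assert (0 <= (eps/2)^n) by (apply pow_le; lra).
  apply Rle_trans with (C * (eps/2)^n). apply Rmult_le_compat_l; lra.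
  apply Rmult_le_compat_r; lra.
Qed.

Lemma qseq_plus x y : qseq x -> qseq y -> qseq (fun n => x n + y n).
Proof.
  intros hx hy eps he. destruct (hx (eps/2)) as [N1 h1]. lra.
  destruct (hy (eps/2)) as [N2 h2]. lra.
  exists (max 1 (max N1 N2)). intros n hn.
  specialize (h1 n ltac:(lia)). specialize (h2 n ltac:(lia)).
  replace (eps ^ n) with (2 ^ n * (eps/2)^n) by (rewrite <- Rpow_mult_distr; f_equal; field).
  assert (0 <= (eps/2)^n) by (apply pow_le; lra).
  assert (2 <= 2 ^ n). { replace 2 with (2^1) at 1 by (simpl; lra). apply Rle_pow; lra || lia. }
  nra.
Qed.

Lemma qseq_geom x K : 0 < K -> qseq x -> qseq (fun n => K ^ n * x n).
Proof.
  intros hK hx eps he. destruct (hx (eps/K)) as [N h]. apply Rdiv_lt_0_compat; lra.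
  exists N. intros n hn. specialize (h n hn).
  replace (eps ^ n) with (K ^ n * (eps/K)^n) by (rewrite <- Rpow_mult_distr; f_equal; field; lra).
  apply Rmult_le_compat_l. apply pow_le; lra. exact h.
Qed.

Lemma qseq_nmul x : qseq x -> qseq (fun n => (INR n + 1) * x n).
Proof.
  intros hx eps he. destruct (hx (eps/2)) as [N h]. lra.
  exists N. intros n hn. specialize (h n hn).
  replace (eps ^ n) with (2 ^ n * (eps/2)^n) by (rewrite <- Rpow_mult_distr; f_equal; field).
  assert (0 <= (eps/2)^n) by (apply pow_le; lra). pose proof (pow2_ge n). pose proof (pos_INR n).
  apply Rle_trans with ((INR n + 1) * (eps/2)^n). apply Rmult_le_compat_l; lra.
  apply Rmult_le_compat_r; lra.
Qed.

Lemma qseq_shift x : qseq x -> qseq (fun n => x (S n)).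
Proof.
  intros hx eps he. set (e := Rmin eps 1).
  assert (0 < e) by (unfold e; apply Rmin_glb_lt; lra).
  assert (e <= eps) by apply Rmin_l. assert (e <= 1) by apply Rmin_r.
  destruct (hx e H) as [N h]. exists N. intros n hn. specialize (h (S n) ltac:(lia)).
  simpl in h. assert (0 <= e ^ n) by (apply pow_le; lra).
  assert (e ^ n <= eps ^ n) by (apply pow_incr; lra). nra.
Qed.

Lemma qseq_unshift x : qseq (fun n => x (S n)) -> qseq x.
Proof.
  intros hx eps he. destruct (qseq_scale _ (/ eps) ltac:(left; apply Rinv_0_lt_compat; lra) hx eps he) as [N h].
  exists (S N). intros n hn. destruct n as [|n]. lia. specialize (h n ltac:(lia)). simpl in h.
  simpl. apply Rmult_le_reg_l with (/ eps). apply Rinv_0_lt_compat; lra.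
  replace (/ eps * (eps * eps ^ n)) with (eps ^ n) by (field; lra). exact h.
Qed.

Lemma qseq_le x y : (forall n, y n <= x n) -> qseq x -> qseq y.
Proof. intros h hx eps he. destruct (hx eps he) as [N hN]. exists N. intros n hn. eapply Rle_trans; eauto. Qed.

Lemma qseq_const0 w : 0 <= w -> qseq (fun _ => w) -> w = 0.
Proof.
  intros hw h. destruct hw as [hw|]; [|auto]. exfalso.
  destruct (h (1/2) ltac:(lra)) as [N hN].
  destruct (pow_lt_1_zero (1/2) ltac:(rewrite Rabs_right; lra) w hw) as [N2 h2].
  specialize (hN (max N N2) ltac:(lia)). specialize (h2 (max N N2) ltac:(lia)).
  rewrite Rabs_right in h2. lra. apply Rle_ge, pow_le; lra.
Qed.

Lemma qseq_quasinil (x : nat -> R) : (forall n, 0 <= x n) ->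
  qseq x <-> Un_cv (fun n => nroot (x n) n) 0.
Proof.
  intros hpos; split.
  - intros hq eps he. destruct (hq (eps/2) ltac:(lra)) as [N h].
    exists (max N 1). intros n hn. specialize (h n ltac:(lia)). unfold Rdist, nroot.
    destruct (Req_EM_T (x n) 0). rewrite Rminus_0_r, Rabs_R0; lra.
    assert (0 < x n) by (destruct (hpos n); auto; congruence).
    assert (0 < INR n) by (apply lt_0_INR; lia).
    assert (Rpower (x n) (/ INR n) <= eps / 2).
    { apply Rle_trans with (Rpower ((eps/2)^n) (/ INR n)).
      apply Rle_Rpower_l. left; apply Rinv_0_lt_compat; lra. lra.
      rewrite <- Rpower_pow by lra. rewrite Rpower_mult. rewrite Rinv_r by lra. rewrite Rpower_1 by lra. lra. }
    assert (0 < Rpower (x n) (/ INR n)) by (unfold Rpower; apply exp_pos).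
    rewrite Rminus_0_r, Rabs_right; lra.
  - intros hc eps he. destruct (hc eps he) as [N h].
    exists (max N 1). intros n hn. specialize (h n ltac:(lia)). unfold Rdist, nroot in h.
    destruct (Req_EM_T (x n) 0) as [e|ne]. rewrite e; apply pow_le; lra.
    assert (0 < x n) by (destruct (hpos n); auto; congruence).
    assert (0 < INR n) by (apply lt_0_INR; lia).
    assert (0 < Rpower (x n) (/ INR n)) by (unfold Rpower; apply exp_pos).
    rewrite Rminus_0_r, Rabs_right in h by lra.
    replace (x n) with (Rpower (x n) (/ INR n) ^ n).
    apply pow_incr; lra.
    rewrite <- Rpower_pow by lra. rewrite Rpower_mult. rewrite Rinv_l by lra. apply Rpower_1; lra.
Qed.

Infix "+^" := (add _) (at level 50, left associativity).
Infix "*^" := (mul _) (at level 40, left associativity).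
Notation "-^ x" := (opp _ x) (at level 35, right associativity).

Lemma addr0 (X : CBanachAlgebra) (x : X) : x +^ zero X = x.
Proof. rewrite addC; apply add0. Qed.
Lemma addNl (X : CBanachAlgebra) (x : X) : -^ x +^ x = zero X.
Proof. rewrite addC; apply addN. Qed.
Lemma addKl (X : CBanachAlgebra) (x y z : X) : x +^ y = x +^ z -> y = z.
Proof. intros h. rewrite <- (add0 X y), <- (add0 X z), <- (addNl X x), <- !addA, h; reflexivity. Qed.
Lemma mulr0 (X : CBanachAlgebra) (x : X) : x *^ zero X = zero X.
Proof. apply (addKl X (x *^ zero X)). rewrite <- mulDr, !addr0. reflexivity. Qed.
Lemma mul0r (X : CBanachAlgebra) (x : X) : zero X *^ x = zero X.
Proof. apply (addKl X (zero X *^ x)). rewrite <- mulDl, !addr0. reflexivity. Qed.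
Lemma opp_uniq (X : CBanachAlgebra) (x y : X) : x +^ y = zero X -> y = -^ x.
Proof. intros h. apply (addKl X x). rewrite h, addN. reflexivity. Qed.
Lemma mulrN (X : CBanachAlgebra) (x y : X) : x *^ -^ y = -^ (x *^ y).
Proof. apply opp_uniq. rewrite <- mulDr, addN, mulr0. reflexivity. Qed.
Lemma mulNr (X : CBanachAlgebra) (x y : X) : -^ x *^ y = -^ (x *^ y).
Proof. apply opp_uniq. rewrite <- mulDl, addN, mul0r. reflexivity. Qed.
Lemma opp0 (X : CBanachAlgebra) : -^ zero X = zero X.
Proof. symmetry. apply opp_uniq. apply add0. Qed.
Lemma subr_eq0 (X : CBanachAlgebra) (x y : X) : x = y -> x +^ -^ y = zero X.
Proof. intros ->; apply addN. Qed.

Lemma scal0 (X : CBanachAlgebra) (x : X) : scal X C0 x = zero X.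
Proof.
  apply (addKl X (scal X C0 x)). rewrite <- scalDl, addr0.
  f_equal. unfold Cadd, C0; simpl. f_equal; lra.
Qed.
Lemma scalr0 (X : CBanachAlgebra) a : scal X a (zero X) = zero X.
Proof. apply (addKl X (scal X a (zero X))). rewrite <- scalDr, !addr0. reflexivity. Qed.
Lemma norm0 (X : CBanachAlgebra) : norm X (zero X) = 0.
Proof. rewrite <- (scal0 X (zero X)), norm_scal. unfold Cmod, C0; simpl.
  replace (0*0+0*0) with 0 by lra. rewrite sqrt_0. lra. Qed.

Definition gp (X : CBanachAlgebra) (x : X) n := gpow (one X) (mul X) x n.

Lemma gp_add (X : CBanachAlgebra) (x : X) m n : gp X x m *^ gp X x n = gp X x (m + n).
Proof. unfold gp; induction m; simpl. apply mul1l. rewrite <- mulA. rewrite IHm. reflexivity. Qed.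

Lemma gp_comm (X : CBanachAlgebra) (x y : X) n : x *^ y = y *^ x -> gp X x n *^ y = y *^ gp X x n.
Proof. intros h. unfold gp; induction n; simpl. rewrite mul1l, mul1r; reflexivity.
  rewrite <- mulA, IHn, !mulA, h. reflexivity. Qed.

Lemma gp_S_r (X : CBanachAlgebra) (x : X) n : gp X x (S n) = gp X x n *^ x.
Proof. change (gp X x (S n)) with (x *^ gp X x n). symmetry; apply gp_comm; reflexivity. Qed.

Lemma norm_gp (X : CBanachAlgebra) (x : X) n : norm X (gp X x n) <= norm X x ^ n.
Proof. unfold gp; induction n; simpl. rewrite norm_one; lra.
  eapply Rle_trans. apply norm_submult. apply Rmult_le_compat_l. apply norm_ge0. apply IHn. Qed.

Lemma norm_ge0' (X : CBanachAlgebra) (x : X) : 0 <= norm X x.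
Proof. apply norm_ge0. Qed.

Definition sc (X : CBanachAlgebra) (mu : Cplx) n (y : X) := Nat.iter n (scal X mu) y.

Lemma sc_mull (X : CBanachAlgebra) mu n (y z : X) : sc X mu n y *^ z = sc X mu n (y *^ z).
Proof. induction n; simpl. reflexivity. unfold sc in *; simpl. rewrite scal_mull, IHn. reflexivity. Qed.
Lemma sc_mulr (X : CBanachAlgebra) mu n (y z : X) : z *^ sc X mu n y = sc X mu n (z *^ y).
Proof. induction n; simpl. reflexivity. unfold sc in *; simpl. rewrite scal_mulr, IHn. reflexivity. Qed.
Lemma sc_S_r (X : CBanachAlgebra) mu n (y : X) : sc X mu (S n) y = sc X mu n (scal X mu y).
Proof. induction n. reflexivity. unfold sc in *; simpl in *. rewrite IHn. reflexivity. Qed.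
Lemma norm_sc (X : CBanachAlgebra) mu n (y : X) : norm X (sc X mu n y) = Cmod mu ^ n * norm X y.
Proof. induction n; simpl. lra. unfold sc in *; simpl. rewrite norm_scal, IHn. lra. Qed.
Lemma Cmod_ge0 a : 0 <= Cmod a.
Proof. apply sqrt_pos. Qed.

Fixpoint Tf (X : CBanachAlgebra) (a b d : X) n : X :=
  match n with O => zero X | S k => b *^ gp X d k +^ a *^ Tf X a b d k end.


Lemma amb (X : CBanachAlgebra) (lam : Cplx) (a b d : X) (hab : a *^ b = scal X lam (b *^ d)) m : gp X a m *^ b = sc X lam m (b *^ gp X d m).
Proof.
  induction m. simpl. rewrite mul1l, mul1r. reflexivity.
  change (gp X a (S m)) with (a *^ gp X a m). rewrite <- mulA, IHm, sc_mulr, sc_S_r.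
  f_equal. rewrite mulA, hab, scal_mull, <- mulA. reflexivity.
Qed.

Lemma norm_amb (X : CBanachAlgebra) (lam : Cplx) (a b d : X) (hab : a *^ b = scal X lam (b *^ d)) m j : norm X (gp X a m *^ (b *^ gp X d j)) <= Cmod lam ^ m * norm X b * norm X (gp X d (m + j)).
Proof.
  rewrite mulA, (amb X lam a b d hab), sc_mull, norm_sc, <- mulA, gp_add, Rmult_assoc.
  apply Rmult_le_compat_l. apply pow_le, Cmod_ge0. apply norm_submult.
Qed.

Definition K (lam : Cplx) := Rmax 1 (Cmod lam).

Lemma Tf_bound (X : CBanachAlgebra) (lam : Cplx) (a b d : X) (hab : a *^ b = scal X lam (b *^ d)) n : forall m, norm X (gp X a m *^ Tf X a b d (S n)) <=
   INR (S n) * K lam ^ (m + S n) * norm X b * norm X (gp X d (m + n)).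
Proof.
  assert (hK : 1 <= K lam) by apply Rmax_l. assert (hK2 : Cmod lam <= K lam) by apply Rmax_r.
  pose proof (Cmod_ge0 lam) as hc.
  assert (hcm : forall m p, Cmod lam ^ m <= K lam ^ (m + p)).
  { intros m p. eapply Rle_trans. apply pow_incr. split; [exact hc| exact hK2]. apply Rle_pow; [lra|lia]. }
  induction n; intros m.
  - simpl Tf. rewrite mulr0, addr0. eapply Rle_trans. apply (norm_amb X lam a b d hab).
    rewrite Nat.add_0_r. simpl INR. rewrite Rmult_1_l.
    apply Rmult_le_compat_r. apply norm_ge0. apply Rmult_le_compat_r. apply norm_ge0. apply hcm.
  - change (Tf X a b d (S (S n))) with (b *^ gp X d (S n) +^ a *^ Tf X a b d (S n)).
    rewrite mulDr. eapply Rle_trans. apply norm_triangle.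
    rewrite (mulA X (gp X a m) a), <- gp_S_r.
    pose proof (IHn (S m)) as h. pose proof (norm_amb X lam a b d hab m (S n)) as h2.
    replace (S m + S n)%nat with (m + S (S n))%nat in h by lia.
    replace (S m + n)%nat with (m + S n)%nat in h by lia.
    rewrite S_INR. pose proof (norm_ge0 X b). pose proof (norm_ge0 X (gp X d (m + S n))).
    pose proof (hcm m (S (S n))). rewrite S_INR in h. pose proof (pos_INR n).
    assert (0 <= Cmod lam ^ m) by (apply pow_le; auto).
    assert (Cmod lam ^ m * norm X b * norm X (gp X d (m + S n)) <= K lam ^ (m + S (S n)) * norm X b * norm X (gp X d (m + S n))).
    { apply Rmult_le_compat_r; auto. apply Rmult_le_compat_r; auto. }
    rewrite S_INR. set (Z := K lam ^ (m + S (S n)) * norm X b * norm X (gp X d (m + S n))) in *.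
    replace ((INR n + 1) * K lam ^ (m + S (S n)) * norm X b * norm X (gp X d (m + S n))) with ((INR n + 1) * Z) in h by (unfold Z; ring).
    replace ((INR n + 1 + 1) * K lam ^ (m + S (S n)) * norm X b * norm X (gp X d (m + S n))) with ((INR n + 1 + 1) * Z) by (unfold Z; ring).
    lra.
Qed.

Lemma Tf_bound0 (X : CBanachAlgebra) (lam : Cplx) (a b d : X) (hab : a *^ b = scal X lam (b *^ d)) n : norm X (Tf X a b d (S n)) <= (INR n + 1) * K lam ^ (S n) * norm X b * norm X (gp X d n).
Proof. pose proof (Tf_bound X lam a b d hab n 0). simpl gp in H. rewrite mul1l in H. rewrite <- S_INR. exact H. Qed.


Lemma Npow (X : CBanachAlgebra) (a b c d : X) (hbc : b *^ c = zero X) (hdc : d *^ c = zero X) n : M2pow (mk2 a b c d) (S n) =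
  mk2 (gp X a (S n)) (Tf X a b d (S n)) (c *^ gp X a n) (gp X d (S n) +^ c *^ Tf X a b d n).
Proof.
  induction n.
  - unfold M2pow, gp; simpl. unfold M2mul; simpl. rewrite !mulr0, ?addr0, ?add0. reflexivity.
  - unfold M2pow in *. change (gpow (M2one X) M2mul (mk2 a b c d) (S (S n))) with
      (M2mul (mk2 a b c d) (gpow (M2one X) M2mul (mk2 a b c d) (S n))).
    rewrite IHn. unfold M2mul; simpl.
    rewrite !mulDr, !mulA, hbc, hdc, !mul0r, !addr0.
    change (Tf X a b d (S (S n))) with (b *^ gp X d (S n) +^ a *^ Tf X a b d (S n)).
    f_equal; try apply addC.
Qed.

Lemma quasi_block (X : CBanachAlgebra) (lam : Cplx) (a b c d : X) (hab : a *^ b = scal X lam (b *^ d)) (hbc : b *^ c = zero X) (hdc : d *^ c = zero X) :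
  quasinil (one X) (mul X) (norm X) a -> quasinil (one X) (mul X) (norm X) d ->
  quasinil (M2one X) M2mul M2norm (mk2 a b c d).
Proof.
  intros qa qd.
  apply qseq_quasinil in qa; [|intros; apply norm_ge0].
  apply qseq_quasinil in qd; [|intros; apply norm_ge0].
  fold (gp X a) in qa. fold (gp X d) in qd.
  apply qseq_quasinil. intros n. unfold M2norm. pose proof (norm_ge0 X). 
  apply Rplus_le_le_0_compat; auto. apply Rplus_le_le_0_compat; auto. apply Rplus_le_le_0_compat; auto.
  change (qseq (fun n => M2norm (M2pow (mk2 a b c d) n))).
  apply qseq_unshift.
  set (al := fun n => norm X (gp X a n)). set (de := fun n => norm X (gp X d n)).
  set (g := norm X c). set (bb := norm X b).
  assert (hK : 0 < K lam) by (pose proof (Rmax_l 1 (Cmod lam)); unfold K; lra).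
  assert (qu : qseq (fun m => (INR m + 1) * ((K lam * bb) * (K lam ^ m * de m)))).
  { apply qseq_nmul, qseq_scale. unfold bb; pose proof (norm_ge0 X b); nra. apply qseq_geom; auto. }
  assert (qt : qseq (fun m => norm X (Tf X a b d m))).
  { apply qseq_unshift. eapply qseq_le; [|exact qu]. intros m. simpl (S m).
    eapply Rle_trans. apply (Tf_bound0 X lam a b d hab). simpl pow. unfold de, bb. right; ring. }
  assert (hz : forall m, M2norm (M2pow (mk2 a b c d) (S m)) <=
     al (S m) + (INR m + 1) * ((K lam * bb) * (K lam ^ m * de m)) + g * al m + de (S m) + g * norm X (Tf X a b d m)).
  { intros m. rewrite (Npow X a b c d hbc hdc). unfold M2norm; cbn [e11 e12 e21 e22].
    pose proof (Tf_bound0 X lam a b d hab m). pose proof (norm_submult X c (gp X a m)).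
    pose proof (norm_triangle X (gp X d (S m)) (c *^ Tf X a b d m)).
    pose proof (norm_submult X c (Tf X a b d m)).
    unfold al, de, g, bb. simpl pow in *.
    replace ((INR m + 1) * (K lam * K lam ^ m) * norm X b * norm X (gp X d m)) with ((INR m + 1) * (K lam * norm X b * (K lam ^ m * norm X (gp X d m)))) in H by ring.
    lra. }
  eapply qseq_le; [exact hz|].
  repeat apply qseq_plus.
  - apply qseq_shift; exact qa.
  - exact qu.
  - apply qseq_scale. apply norm_ge0. exact qa.
  - apply qseq_shift; exact qd.
  - apply qseq_scale. apply norm_ge0. exact qt.
Qed.

Lemma Cinv_ex (lam : Cplx) : lam <> Defs.C0 -> exists mu, Cmul mu lam = Defs.C1.
Proof.
  destruct lam as [l1 l2]. intros h.
  assert (hp : 0 < l1 * l1 + l2 * l2).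
  { destruct (Req_dec l1 0); destruct (Req_dec l2 0); [subst; exfalso; apply h; reflexivity| nra..]. }
  exists (l1 / (l1*l1+l2*l2), - l2 / (l1*l1+l2*l2)). unfold Cmul, Defs.C1; simpl. f_equal; field; lra.
Qed.

Lemma dd_pow (X : CBanachAlgebra) (d dd : X) : dd *^ d = d *^ dd -> dd *^ d *^ dd = dd ->
  forall n, gp X d n *^ gp X dd (S n) = dd.
Proof.
  intros hc hi n. induction n.
  - unfold gp; simpl. rewrite mul1l, mul1r. reflexivity.
  - change (gp X d (S n)) with (d *^ gp X d n). change (gp X dd (S (S n))) with (dd *^ gp X dd (S n)).
    rewrite <- mulA, (mulA X (gp X d n) dd), (gp_comm X d dd n (eq_sym hc)).
    rewrite <- (mulA X dd), IHn, mulA, <- hc. exact hi.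
Qed.

Lemma bdd0 (X : CBanachAlgebra) lam (a b d dd : X) : lam <> Defs.C0 ->
  quasinil (one X) (mul X) (norm X) a -> a *^ b = scal X lam (b *^ d) ->
  dd *^ d = d *^ dd -> dd *^ d *^ dd = dd -> b *^ dd = zero X.
Proof.
  intros hl qa hab hc hi. destruct (Cinv_ex lam hl) as [mu hmu].
  assert (hbd : b *^ d = scal X mu (a *^ b)).
  { rewrite hab, <- scalA, hmu, scal1. reflexivity. }
  assert (hpow : forall n, b *^ gp X d n = sc X mu n (gp X a n *^ b)).
  { induction n. unfold gp; simpl. rewrite mul1r, mul1l. reflexivity.
    change (gp X d (S n)) with (d *^ gp X d n). rewrite mulA, hbd, scal_mull, <- mulA, IHn, sc_mulr.
    rewrite mulA. reflexivity. }
  apply qseq_quasinil in qa; [|intros; apply norm_ge0]. change (qseq (fun n => norm X (gp X a n))) in qa.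
  apply norm_eq0. apply qseq_const0. apply norm_ge0.
  set (L := Cmod mu * norm X dd + 1).
  pose proof (Cmod_ge0 mu). pose proof (norm_ge0 X dd). pose proof (norm_ge0 X b).
  assert (hL : 0 < L) by (unfold L; nra).
  eapply qseq_le; [| apply (qseq_scale (fun n => L ^ n * norm X (gp X a n)) (norm X b * norm X dd)); [nra| apply (qseq_geom _ L hL qa)]].
  intros n. simpl.
  replace (b *^ dd) with (b *^ (gp X d n *^ gp X dd (S n))) by (rewrite dd_pow; auto).
  rewrite mulA, hpow, sc_mull, norm_sc.
  pose proof (norm_submult X (gp X a n *^ b) (gp X dd (S n))).
  pose proof (norm_submult X (gp X a n) b).
  pose proof (norm_gp X dd (S n)). simpl pow in H4.
  pose proof (norm_ge0 X (gp X a n)). pose proof (norm_ge0 X (gp X a n *^ b)).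
  pose proof (norm_ge0 X (gp X dd (S n))).
  assert (hp : Cmod mu ^ n * norm X dd ^ n <= L ^ n).
  { rewrite <- Rpow_mult_distr. apply pow_incr. split. nra. unfold L; lra. }
  assert (0 <= Cmod mu ^ n) by (apply pow_le; auto). assert (0 <= norm X dd ^ n) by (apply pow_le; auto).
  assert (h1 : norm X (gp X a n *^ b *^ gp X dd (S n)) <= norm X (gp X a n) * norm X b * (norm X dd * norm X dd ^ n)).
  { eapply Rle_trans. apply H2. apply Rmult_le_compat; auto. }
  assert (h2 : Cmod mu ^ n * norm X (gp X a n *^ b *^ gp X dd (S n)) <= Cmod mu ^ n * (norm X (gp X a n) * norm X b * (norm X dd * norm X dd ^ n))) by (apply Rmult_le_compat_l; auto).
  eapply Rle_trans. exact h2.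
  replace (Cmod mu ^ n * (norm X (gp X a n) * norm X b * (norm X dd * norm X dd ^ n))) with
    ((norm X b * norm X dd) * ((Cmod mu ^ n * norm X dd ^ n) * norm X (gp X a n))) by ring.
  apply Rmult_le_compat_l. nra. apply Rmult_le_compat_r; auto.
Qed.

Lemma zl (X : CBanachAlgebra) (u v : X) : u *^ v = zero X -> forall x, u *^ (v *^ x) = zero X.
Proof. intros h x. rewrite mulA, h, mul0r. reflexivity. Qed.

Ltac nalg := rewrite ?mulDl, ?mulDr, <- ?mulA, ?mul0r, ?mulr0, ?addr0, ?add0, ?opp0, ?mulrN, ?mulNr.

Theorem corollary3p4 (X : CBanachAlgebra) (lam : Cplx) (A B C D Ad Dd : X) :
  lam <> C0 ->
  is_gdrazin A Ad -> is_gdrazin D Dd ->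
  mul X A B = scal X lam (mul X (mul X (spid A Ad) B) D) ->
  mul X D C = zero X ->
  mul X B C = zero X ->
  let M := mk2 A B C D in
  let Q := mk2 (zero X) B C (zero X) in
  let Pd := mk2 Ad (zero X) (zero X) Dd in
  exists Md : M2 X,
    is_gdrazin2 M Md /\
    M2series_to (fun n => M2mul (M2mul (M2pow M n) Q) (M2pow Pd (n + 2)))
                (M2add Md (M2opp Pd)).
Proof.
  intros hl [hAc [hAi hAq]] [hDc [hDi hDq]] hAB hDC hBC M Q Pd.
  unfold spid in hAB.
  assert (F1 : Ad *^ (one X +^ -^ (A *^ Ad)) = zero X).
  { rewrite mulDr, mul1r, mulrN, mulA, hAi, addN. reflexivity. }
  assert (hAdd : Ad = Ad *^ (Ad *^ A)).
  { rewrite hAc, mulA, hAi. reflexivity. }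
  assert (hDdd : Dd = Dd *^ (Dd *^ D)).
  { rewrite hDc, mulA, hDi. reflexivity. }
  assert (hAdAB : Ad *^ (A *^ B) = zero X).
  { rewrite hAB, scal_mulr, !mulA, F1, !mul0r, scalr0. reflexivity. }
  assert (hAdB : Ad *^ B = zero X).
  { rewrite hAdd, <- !mulA, hAdAB, mulr0. reflexivity. }
  assert (hDdC : Dd *^ C = zero X).
  { rewrite hDdd, <- !mulA, hDC, !mulr0. reflexivity. }
  assert (hAB' : A *^ B = scal X lam (B *^ D)).
  { rewrite hAB. f_equal. f_equal. rewrite mulDl, mul1l, mulNr, <- mulA, hAdB, mulr0, opp0, addr0. reflexivity. }
  set (a1 := A +^ -^ (A *^ A *^ Ad)) in hAq.
  assert (ha1B : a1 *^ B = scal X lam (B *^ D)).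
  { unfold a1. rewrite mulDl, mulNr, <- mulA, hAdB, mulr0, opp0, addr0. exact hAB'. }
  assert (hBDd : B *^ Dd = zero X) by (exact (bdd0 X lam a1 B D Dd hl hAq ha1B hDc hDi)).
  set (d1 := D +^ -^ (D *^ D *^ Dd)) in hDq.
  assert (hBd1 : B *^ d1 = B *^ D).
  { unfold d1. replace (D *^ D *^ Dd) with (Dd *^ D *^ D) by (symmetry; rewrite <- mulA, <- hDc, mulA, <- hDc; reflexivity).
    rewrite mulDr, mulrN, !mulA, hBDd, !mul0r, opp0, addr0. reflexivity. }
  rewrite <- hBd1 in ha1B.
  set (c := C +^ -^ (C *^ (A *^ Ad))).
  assert (hyc : forall y, y *^ C = zero X -> y *^ c = zero X).
  { intros y hy. unfold c. rewrite mulDr, mulrN, mulA, hy, mul0r, opp0, addr0. reflexivity. }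
  assert (hBc : B *^ c = zero X) by auto.
  assert (hd1c : d1 *^ c = zero X).
  { unfold d1. rewrite mulDl, mulNr, <- mulA, (hyc Dd hDdC), !mulr0, opp0, addr0. auto. }
  pose proof (quasi_block X lam a1 B c d1 ha1B hBc hd1c hAq hDq) as QN.
  pose proof (zl X _ _ hBC) as hBC'. pose proof (zl X _ _ hDC) as hDC'.
  pose proof (zl X _ _ hAdB) as hAdB'. pose proof (zl X _ _ hDdC) as hDdC'. pose proof (zl X _ _ hBDd) as hBDd'.
  assert (hAi' : Ad *^ (A *^ Ad) = Ad) by (rewrite mulA; exact hAi).
  assert (hDi' : Dd *^ (D *^ Dd) = Dd) by (rewrite mulA; exact hDi).
  assert (hBDD : B *^ (D *^ Dd) = zero X) by (rewrite <- hDc; apply hBDd').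
  exists (mk2 Ad (zero X) (C *^ (Ad *^ Ad)) Dd). split.
  unfold is_gdrazin2, gdrazin. split; [|split].
  - unfold M, M2mul; cbn [e11 e12 e21 e22]. f_equal; nalg; rewrite ?hBC, ?hBC', ?hDC, ?hDC', ?hAdB, ?hAdB', ?hDdC, ?hDdC', ?hBDd, ?hBDd'; nalg.
    all: rewrite <- ?hAdd; first [reflexivity | exact hAc | exact hDc].
  - unfold M, M2mul; cbn [e11 e12 e21 e22]. f_equal; nalg; rewrite ?hBC, ?hBC', ?hDC, ?hDC', ?hAdB, ?hAdB', ?hDdC, ?hDdC', ?hBDd, ?hBDd'; nalg.
    all: rewrite ?hAi', ?hDi'; reflexivity.
  - replace (M2add M (M2opp (M2mul (M2mul M M) (mk2 Ad (zero X) (C *^ (Ad *^ Ad)) Dd)))) with (mk2 a1 B c d1); [exact QN|].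
    unfold M, M2mul, M2add, M2opp, a1, c, d1; cbn [e11 e12 e21 e22]. f_equal; nalg; rewrite ?hBC, ?hBC', ?hDC, ?hDC', ?hAdB, ?hAdB', ?hDdC, ?hDdC', ?hBDd, ?hBDd'; nalg.
    all: rewrite ?hBDD, ?opp0, ?addr0; reflexivity.
  - assert (hPd : forall p, M2pow Pd p = mk2 (gp X Ad p) (zero X) (zero X) (gp X Dd p)).
    { induction p. reflexivity. unfold M2pow in *.
      change (gpow (M2one X) M2mul Pd (S p)) with (M2mul Pd (gpow (M2one X) M2mul Pd p)).
      rewrite IHp. unfold Pd, M2mul; cbn [e11 e12 e21 e22]. f_equal; nalg; reflexivity. }
    assert (hcol : forall k, e12 (M2pow M (S k)) *^ C = zero X /\ e22 (M2pow M (S k)) *^ C = zero X).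
    { induction k.
      - change (M2pow M 1) with (M2mul M (M2one X)). unfold M2mul, M, M2one; cbn [e11 e12 e21 e22].
        rewrite !mulr0, !add0, !mul1r. split; assumption.
      - change (M2pow M (S (S k))) with (M2mul M (M2pow M (S k))). destruct IHk as [h1 h2].
        destruct (M2pow M (S k)) as [y11 y12 y21 y22]. cbn in h1, h2. unfold M2mul, M; cbn [e11 e12 e21 e22].
        rewrite !mulDl, <- !mulA, h1, h2, !mulr0, addr0. split; reflexivity. }
    assert (hBD2 : forall j, B *^ gp X Dd (S j) = zero X).
    { intro j. change (B *^ (Dd *^ gp X Dd j) = zero X). apply hBDd'. }
    assert (hf : forall k, M2mul (M2mul (M2pow M (S k)) Q) (M2pow Pd (S k + 2)) = M2zero X).
    { intros k. rewrite hPd. destruct (hcol k) as [h1 h2]. destruct (M2pow M (S k)) as [y11 y12 y21 y22].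
      cbn in h1, h2. unfold Q, M2mul, M2zero; cbn [e11 e12 e21 e22]. simpl (S k + 2)%nat.
      rewrite ?mulr0, ?add0, ?addr0, ?h1, ?h2, ?mul0r, <- ?mulA, ?hBD2, ?mulr0, ?addr0, ?add0; reflexivity. }
    assert (hf0 : M2mul (M2mul (M2pow M 0) Q) (M2pow Pd (0 + 2)) = M2add (mk2 Ad (zero X) (C *^ (Ad *^ Ad)) Dd) (M2opp Pd)).
    { rewrite hPd. unfold Q, Pd, M2mul, M2add, M2opp, M2pow, M2one; cbn [e11 e12 e21 e22 gpow gp Nat.add].
      rewrite !addN, opp0, addr0. nalg. rewrite ?hBDd', ?hBDd, ?mulr0, ?mul1r, ?mul1l, ?add0, ?addr0. reflexivity. }
    assert (hpart : forall n, M2partial (fun n => M2mul (M2mul (M2pow M n) Q) (M2pow Pd (n + 2))) n =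
       M2mul (M2mul (M2pow M 0) Q) (M2pow Pd (0 + 2))).
    { induction n. reflexivity. simpl M2partial. rewrite IHn, hf. unfold M2add, M2zero; cbn [e11 e12 e21 e22].
      rewrite !addr0. destruct (M2mul (M2mul (M2pow M 0) Q) (M2pow Pd (0 + 2))); reflexivity. }
    intros eps he. exists 0%nat. intros n _. rewrite hpart, hf0.
    unfold M2norm, M2add, M2opp; cbn [e11 e12 e21 e22]. rewrite !addN, norm0. lra.
Qed.
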